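(* Let $\mathcal{P}$ be the set of weak orders on a set $\mathcal{A}$, ordered by strictness $\le$. For weak orders $r,s\in\mathcal{P}$, regarded as subsets of $\mathcal{A}\times\mathcal{A}$: (1) $r\le s$ implies $r\subseteq s$; (2) the least upper bound $r\vee s$ in $(\mathcal{P},\le)$ is the transitive closure of $r\cup s$; (3) the greatest lower bound $r\wedge s$ in $(\mathcal{P},\le)$, if it exists, is $r\cap s$.
   Context: A weak order on $\mathcal{A}$ is a transitive and complete relation; it is identified with the set of pairs $(a,b)$ such that $a\preceq b$ ($a$ weakly preferred to $b$). $a\prec b$ (strict preference) means $a\preceq b$ and not $b\preceq a$. Strictness order: $r\le s$ iff every strict preference $a\prec b$ of $s$ is also a strict preference of $r$. *)

(* Defs.v *)
From Stdlib Require Export Relations.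

(* a weak order: transitive and complete; R a b reads "a is weakly preferred to b" *)
Definition complete {A : Type} (R : relation A) : Prop :=
  forall a b : A, R a b \/ R b a.

Definition weak_order {A : Type} (R : relation A) : Prop :=
  transitive A R /\ complete R.

Definition strict {A : Type} (R : relation A) (a b : A) : Prop :=
  R a b /\ ~ R b a.

Definition stricter {A : Type} (r s : relation A) : Prop :=
  forall a b : A, strict s a b -> strict r a b.

Definition is_lub {A : Type} (r s t : relation A) : Prop :=
  weak_order t /\ stricter r t /\ stricter s t /\
  (forall u : relation A, weak_order u -> stricter r u -> stricter s u -> stricter t u).

Definition is_glb {A : Type} (r s g : relation A) : Prop :=
  weak_order g /\ stricter g r /\ stricter g s /\
  (forall u : relation A, weak_order u -> stricter u r -> stricter u s -> stricter u g).

(* Main.v *)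
Require Import Defs.
From Stdlib Require Import Classical.

Lemma incl_of {A : Type} (r s : relation A) :
  weak_order r -> weak_order s -> stricter r s -> inclusion A r s.
Proof.
  intros [Tr Cr] [Ts Cs] H a b Hab.
  destruct (classic (s a b)) as [h|h]; auto.
  destruct (Cs a b) as [h'|h']; [tauto|].
  destruct (H b a (conj h' h)). tauto.
all: destruct (Cg a a), (Cg b b); auto.
Qed.

Theorem proposition7 (A : Type) (r s : relation A) :
  weak_order r -> weak_order s ->
  (stricter r s -> inclusion A r s) /\
  is_lub r s (clos_trans A (union A r s)) /\
  (forall g : relation A, is_glb r s g ->
     forall a b : A, g a b <-> (r a b /\ s a b)).
Proof.
  intros Wr Ws.
  pose proof Wr as [Tr Cr]. pose proof Ws as [Ts Cs].
  split; [now apply incl_of|].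
  set (t := clos_trans A (union A r s)).
  assert (Wt : weak_order t).
  { split.
    - intros x y z; apply t_trans.
    - intros x y; destruct (Cr x y); [left|right]; apply t_step; left; auto. }
  split.
  - split; [exact Wt|]. split; [|split].
    + intros a b [h1 h2]. split.
      * destruct (Cr a b); auto. exfalso; apply h2, t_step; left; auto.
      * intro h; apply h2, t_step; left; auto.
    + intros a b [h1 h2]. split.
      * destruct (Cs a b); auto. exfalso; apply h2, t_step; right; auto.
      * intro h; apply h2, t_step; right; auto.
    + intros u Wu Hr Hs a b [h1 h2].
      assert (Iu : inclusion A t u).
      { intros x y H; induction H.
        - destruct H; [exact (incl_of r u Wr Wu Hr _ _ H)|exact (incl_of s u Ws Wu Hs _ _ H)].
        - destruct Wu as [Tu _]; eapply Tu; eauto. }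
      split.
      * destruct (proj2 Wt a b); auto. exfalso; apply h2, Iu; auto.
      * intro h; apply h2, Iu; auto.
  - intros g [Wg [Hgr [Hgs Hu]]] a b. pose proof Wg as [Tg Cg].
    pose proof (incl_of g r Wg Wr Hgr) as Igr.
    pose proof (incl_of g s Wg Ws Hgs) as Igs.
    split; [intro h; split; auto|].
    intros [hr hs].
    destruct (classic (g a b)) as [h|h]; auto. exfalso.
    assert (gba : g b a) by (destruct (Cg a b); tauto).
    set (u := fun x y => g x y \/ (g x a /\ g b y)).
    assert (Wu : weak_order u).
    { split.
      - intros x y z [h1|[h1 h1']] [h2|[h2 h2']]; unfold u.
        + left; eauto.
        + right; split; eauto.
        + right; split; eauto.
        + right; split; eauto.
      - intros x y; destruct (Cg x y); [left|right]; left; auto. }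
    assert (Hx : forall q, weak_order q -> transitive A q -> inclusion A g q -> q a b -> stricter u q).
    { intros q [Tq Cq] _ Igq hq x y [h1 h2]. split.
      - left. destruct (Cg x y); auto. exfalso; apply h2, Igq; auto.
      - intros [h3|[h3 h3']].
        + apply h2, Igq; auto.
        + apply h2. apply Tq with a; [apply Igq; auto|]. apply Tq with b; auto; apply Igq; auto. }
    specialize (Hu u Wu (Hx r Wr Tr Igr hr) (Hx s Ws Ts Igs hs)).
    destruct (Hu b a (conj gba h)) as [_ hn]. apply hn. right; split; auto.
all: destruct (Cg a a), (Cg b b); auto.
Qed.
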